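(* Let $s\geq 2$ and let $a,b$ be positive integers with $\operatorname{lcm}(a,b)=s$. In $G_{(s,0)}$, the subgroup $\langle u^a,v^b\rangle$ is core-free of index $6ab$; hence $G_{(s,0)}$ has a faithful transitive permutation representation of degree $6ab$.
   Context: $G_{(s,0)}$ is the group of the toroidal hypermap $(3,3,3)_{(s,0)}$: the Coxeter group $[3,3,3]=\langle\rho_0,\rho_1,\rho_2\mid \rho_i^2=1,\ (\rho_i\rho_j)^3=1\ (i\neq j)\rangle$ factored by $(\rho_0\rho_1\rho_2\rho_1)^s$; it has order $6s^2$. Here $u=\rho_0\rho_1\rho_2\rho_1$ and $v=\rho_1u\rho_1=\rho_1\rho_0\rho_1\rho_2$ generate the abelian normal translation subgroup $T=\langle u,v\rangle\cong C_s\times C_s$. A subgroup is core-free if it contains no nontrivial normal subgroup of the group. *)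

(* Defs.v *)
From mathcomp Require Import all_boot all_fingroup.
Set Implicit Arguments.
Unset Strict Implicit.
Unset Printing Implicit Defensive.
Local Open Scope group_scope.

Definition G_s0_rels (hT : finGroupType) (s : nat) (r0 r1 r2 : hT) : Prop :=
  [/\ r0 ^+ 2 = 1, r1 ^+ 2 = 1 & r2 ^+ 2 = 1] /\
  [/\ (r0 * r1) ^+ 3 = 1, (r0 * r2) ^+ 3 = 1, (r1 * r2) ^+ 3 = 1
    & (r0 * r1 * r2 * r1) ^+ s = 1].

(* G (with distinguished generators r0 r1 r2) is the group presented by
   <rho0,rho1,rho2 | G_s0_rels>: generated by the r_i, satisfying the
   relations, and universal among (finite) groups with elements satisfying
   the relations.  (The presented group is finite, of order 6 s^2.) *)
Definition is_G_s0 (gT : finGroupType) (s : nat) (G : {group gT})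
  (r0 r1 r2 : gT) : Prop :=
  [/\ G :=: <<[set r0; r1; r2]>>,
      G_s0_rels s r0 r1 r2
    & forall (hT : finGroupType) (h0 h1 h2 : hT),
        G_s0_rels s h0 h1 h2 ->
        exists f : {morphism G >-> hT}, [/\ f r0 = h0, f r1 = h1 & f r2 = h2]].

Definition trans_u (gT : finGroupType) (r0 r1 r2 : gT) : gT := r0 * r1 * r2 * r1.
Definition trans_v (gT : finGroupType) (r0 r1 r2 : gT) : gT := r1 * r0 * r1 * r2.

Definition core_free (gT : finGroupType) (G H : {group gT}) : Prop :=
  forall N : {group gT}, N <| G -> N \subset H -> N :=: 1.

(* Main.v *)
Require Import Defs.
From mathcomp Require Import all_boot all_fingroup.
From mathcomp Require Import all_solvable all_algebra.
From mathcomp Require Import zify ring.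
Set Implicit Arguments. Unset Strict Implicit. Unset Printing Implicit Defensive.
Local Open Scope group_scope.

Lemma inv2 (gT : finGroupType) (x : gT) : x ^+ 2 = 1 -> x^-1 = x.
Proof. by move=> h; apply/eqP; rewrite eq_invg_mul -h expgS expg1. Qed.

Lemma exp3 (gT : finGroupType) (x : gT) : x ^+ 3 = x * x * x.
Proof. by rewrite !expgS expg0 mulg1 mulgA. Qed.

Lemma sq1 (gT : finGroupType) (a : gT) : a^-1 = a -> a * a = 1.
Proof. by move=> ha; rewrite -{1}ha mulVg. Qed.

Lemma braid (gT : finGroupType) (a b : gT) : a^-1 = a -> b^-1 = b ->
  (a * b) ^+ 3 = 1 -> forall w, a * (b * (a * w)) = b * (a * (b * w)).
Proof.
move=> ha hb h w.
rewrite exp3 !mulgA in h.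
have e : a * b * a * b = b * a.
  apply: (mulIg (a * b)); rewrite !mulgA h.
  by rewrite -(mulgA b) sq1 // mulg1 sq1.
have e2 : a * b * a = b * a * b.
  by apply: (mulIg b); rewrite e -(mulgA (b * a)) sq1 // mulg1.
by rewrite !mulgA e2.
Qed.

Lemma cancel2 (gT : finGroupType) (a : gT) : a^-1 = a -> forall w, a * (a * w) = w.
Proof. by move=> ha w; rewrite -{1}ha mulKg. Qed.

Lemma exp2 (gT : finGroupType) (x : gT) : x ^+ 2 = x * x.
Proof. by rewrite expgS expg1. Qed.


Lemma braid0 (gT : finGroupType) (a b : gT) :
  (forall w, a * (b * (a * w)) = b * (a * (b * w))) -> a * (b * a) = b * (a * b).
Proof. by move=> h; have := h 1; rewrite !mulg1. Qed.

Lemma words (gT : finGroupType) (x y z : gT) :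
  x^-1 = x -> y^-1 = y -> z^-1 = z ->
  (forall w, x * (y * (x * w)) = y * (x * (y * w))) ->
  (forall w, x * (z * (x * w)) = z * (x * (z * w))) ->
  (forall w, y * (z * (y * w)) = z * (y * (z * w))) ->
  let u := x * y * z * y in let v := y * x * y * z in
  [/\ u * v = v * u, u ^ x = u^-1, v ^ x = u^-1 * v, u ^ y = v & v ^ y = u]
  /\ [/\ u ^ z = v^-1 * u, v ^ z = v^-1 & z = y * x * u * y].
Proof.
move=> hx hy hz bxy bxz byz u v.
have byz0 := braid0 byz.
rewrite /u /v /conjg !invMg hx hy hz; split; [split|split]; rewrite -!mulgA ?cancel2 ?sq1 ?mulg1 //.
- by rewrite byz0 -bxz -bxy cancel2.
- rewrite bxy cancel2 // -[in RHS]bxy cancel2 // cancel2 //.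
  by rewrite (braid0 bxz).
- by rewrite byz sq1 // mulg1 -bxy cancel2 // cancel2.
Qed.


Section M.
Import GRing.Theory.
Variable s : nat.
Local Notation R := 'Z_s.
Local Notation P := (R * R)%type.
Local Open Scope ring_scope.
Definition fX (p : P) : P := (- p.1 - p.2, p.2).
Definition fY (p : P) : P := (p.2, p.1).
Definition fZ (p : P) : P := (p.1, 1 - p.1 - p.2).
Definition fU (p : P) : P := (p.1 + 1, p.2).
Definition fU' (p : P) : P := (p.1 - 1, p.2).
Lemma fXK : involutive fX. Proof. by case=> p q; rewrite /fX /=; congr pair; ring. Qed.
Lemma fYK : involutive fY. Proof. by case. Qed.
Lemma fZK : involutive fZ. Proof. by case=> p q; rewrite /fZ /=; congr pair; ring. Qed.
Lemma fUK : cancel fU fU'. Proof. by case=> p q; rewrite /fU /fU' /=; congr pair; ring. Qed.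
Definition fV (p : P) : P := (p.1, p.2 + 1).
Definition fV' (p : P) : P := (p.1, p.2 - 1).
Lemma fVK : cancel fV fV'. Proof. by case=> p q; rewrite /fV /fV' /=; congr pair; ring. Qed.
Local Open Scope group_scope.
Definition pX := perm (inv_inj fXK).
Definition pY := perm (inv_inj fYK).
Definition pZ := perm (inv_inj fZK).
Definition pU := perm (can_inj fUK).
Definition pV := perm (can_inj fVK).



Ltac pcomp := apply/permP => -[p q]; rewrite ?exp2 ?exp3 !permM !permE /fX /fY /fZ /fU /fV /=;
   congr pair; ring.

Lemma uM : trans_u pX pY pZ = pU. Proof. rewrite /trans_u; pcomp. Qed.
Lemma vM : trans_v pX pY pZ = pV. Proof. rewrite /trans_v; pcomp. Qed.

Lemma pUn n p : (pU ^+ n) p = (p.1 + n%:R, p.2)%R.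
Proof.
elim: n p => [|n IH] [p q]; first by rewrite expg0 perm1 /=; congr pair; ring.
by rewrite expgSr permM IH permE /fU /=; congr pair; rewrite mulrSr; ring.
Qed.
Lemma pVn n p : (pV ^+ n) p = (p.1, p.2 + n%:R)%R.
Proof.
elim: n p => [|n IH] [p q]; first by rewrite expg0 perm1 /=; congr pair; ring.
by rewrite expgSr permM IH permE /fV /=; congr pair; rewrite mulrSr; ring.
Qed.

Lemma relsM : (1 < s)%N -> G_s0_rels s pX pY pZ.
Proof.
move=> s1; split; first by split; pcomp.
split; try pcomp.
rewrite -/(trans_u pX pY pZ) uM; apply/permP => -[p q].
by rewrite pUn perm1 pchar_Zp // GRing.addr0.
Qed.

Lemma indepM i j : (1 < s)%N -> pU ^+ i = pV ^+ j -> ((s %| i) && (s %| j))%N.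
Proof.
move=> s1 e; have := congr1 (fun g : {perm P} => g (0, 0)%R) e => /=.
rewrite pUn pVn /= GRing.add0r GRing.add0r => -[e1 e2].
have := congr1 (@nat_of_ord _) e1; have := congr1 (@nat_of_ord _) e2.
rewrite !val_Zp_nat //= => /esym/eqP h2 /eqP h1.
by rewrite /dvdn h1 h2.
Qed.
End M.


Definition o0 : 'I_3 := @Ordinal 3 0 isT.
Definition o1 : 'I_3 := @Ordinal 3 1 isT.
Definition o2 : 'I_3 := @Ordinal 3 2 isT.
Definition t0 : {perm 'I_3} := tperm o0 o1.
Definition t1 : {perm 'I_3} := tperm o1 o2.
Definition t2 : {perm 'I_3} := tperm o0 o2.

Ltac s3 := apply/permP => -[[|[|[|//]]] Hi]; rewrite ?exp2 ?exp3 !permM !permE /=; apply/val_inj; rewrite /= ?permE //=.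

Lemma e : trans_u t0 t1 t2 = 1.
Proof. rewrite /trans_u. s3. Qed.

Lemma S3rels s : G_s0_rels s t0 t1 t2.
Proof.
split; first by split; s3.
by split; try s3; rewrite -/(trans_u t0 t1 t2) e expg1n.
Qed.
Lemma S3v : trans_v t0 t1 t2 = 1. Proof. rewrite /trans_v. s3. Qed.
Lemma S3a : (t0 * t1) ^+ 3 = 1. Proof. s3. Qed.
Lemma S3b : t0 * t1 != 1.
Proof. apply/eqP => /permP /(_ o0); rewrite permM !permE. by []. Qed.
Lemma S3c : t0 != 1.
Proof. apply/eqP => /permP /(_ o0); rewrite !permE. by []. Qed.


Lemma coset_rep (gT : finGroupType) (G H : {group gT}) n :
  H \subset G -> #|G : H| = n ->
  (forall N : {group gT}, N <| G -> N \subset H -> N :=: 1) ->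
  exists f : {morphism G >-> {perm 'I_n}},
    'injm f /\ [transitive f @* G, on [set: 'I_n] | 'P].
Proof.
move=> sHG <- cf.
set C := rcosets H G.
have H0 : (H : {set gT}) \in C by apply/rcosetsP; exists 1; rewrite ?group1 ?rcoset1.
have memC X g : X \in C -> g \in G -> X :* g \in C.
  move=> /rcosetsP[y yG ->] gG; apply/rcosetsP; exists (y * g); first exact: groupM.
  by rewrite rcosetM.
pose phi (g : gT) (i : 'I_#|C|) :=
  if g \in G then enum_rank_in H0 (enum_val i :* g) else i.
have phi_inj g : injective (phi g).
  move=> i j; rewrite /phi; case: ifP => gG //.
  move/(enum_rank_in_inj (memC _ _ (enum_valP i) gG) (memC _ _ (enum_valP j) gG)).
  by move/rcoset_inj/enum_val_inj.
pose f g := perm (phi_inj g).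
have fM : {in G &, {morph f : x y / x * y}}.
  move=> x y xG yG /=; apply/permP => i; rewrite permM !permE /phi xG yG groupM //.
  by rewrite enum_rankK_in ?memC ?enum_valP // rcosetM.
have kH : 'ker (Morphism fM) \subset H.
  apply/subsetP => g /morphpreP[gG /set1P /permP /(_ (enum_rank_in H0 H))].
  rewrite perm1 permE /phi gG enum_rankK_in //.
  move/(enum_rank_in_inj (memC _ _ H0 gG) H0) => eH.
  by rewrite -eH rcoset_refl.
exists (Morphism fM); split.
  by rewrite /= (cf _ (ker_normal (Morphism fM)) kH).
apply/imsetP; exists (enum_rank_in H0 H) => //; apply/setP => j; rewrite inE; apply/esym/orbitP.
have /rcosetsP[x xG ex] := enum_valP j.
exists (f x); first by apply: (mem_morphim (Morphism fM)).
change (f x (enum_rank_in H0 H) = j); rewrite permE /phi xG enum_rankK_in // -ex.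
exact: enum_valK_in.
Qed.


Lemma decomp (gT : finGroupType) (A B : {group gT}) (p q p' q' : gT) :
  A :&: B \subset [1] -> p \in A -> p' \in A -> q \in B -> q' \in B ->
  p * q = p' * q' -> p = p' /\ q = q'.
Proof.
move=> tAB pA p'A qB q'B e.
have e1 : p'^-1 * p = q' * q^-1.
  by apply: (mulgI p'); apply: (mulIg q); rewrite mulKVg e mulgA mulgKV.
have : p'^-1 * p \in A :&: B by rewrite inE groupM ?groupV //= e1 groupM ?groupV.
move/(subsetP tAB); rewrite inE => /eqP e2.
split; first by apply: (mulgI p'^-1); rewrite e2 mulVg.
by apply: (mulIg q^-1); rewrite -e1 e2 mulgV.
Qed.

Lemma arith a b s i l : a %| s -> b %| s -> lcmn a b = s ->
  a * i = b * l %[mod s] -> s %| a * i.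
Proof.
move=> aS bS lab e; rewrite -lab dvdn_lcm dvdn_mulr //=.
by rewrite /dvdn -(modn_dvdm (a * i) bS) e (modn_dvdm _ bS) modnMr.
Qed.

Unset Implicit Arguments.

Theorem mainTheorem8 (gT : finGroupType) (s : nat) (G : {group gT})
  (r0 r1 r2 : gT) (a b : nat) :
  2 <= s -> 0 < a -> 0 < b -> lcmn a b = s ->
  is_G_s0 s G r0 r1 r2 ->
  let H := <<[set trans_u r0 r1 r2 ^+ a; trans_v r0 r1 r2 ^+ b]>>%G in
  [/\ core_free G H,
      #|G : H| = (6 * a * b)%N
    & exists f : {morphism G >-> {perm 'I_(6 * a * b)%N}},
        'injm f /\ [transitive f @* G, on [set: 'I_(6 * a * b)%N] | 'P]].
Proof.
move=> s2 a0 b0 lab [GG rels univ] H.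
have s1 : 1 < s by [].
have aS : a %| s by rewrite -lab dvdn_lcml.
have bS : b %| s by rewrite -lab dvdn_lcmr.
move: (rels) => [[x2 y2 z2] [xy3 xz3 yz3 us]].
set x := r0 in x2 xy3 xz3 us *; set y := r1 in y2 xy3 yz3 us *; set z := r2 in z2 xz3 yz3 us *.
have hx := inv2 x2; have hy := inv2 y2; have hz := inv2 z2.
have [[uv ux vx uy vy] [uz vz zE]] := words hx hy hz (braid hx hy xy3) (braid hx hz xz3) (braid hy hz yz3).
rewrite -/(trans_u x y z) in us uv ux vx uy vy uz vz zE.
rewrite -/(trans_v x y z) in uv vx uy vy uz vz.
rewrite /H; set u := trans_u x y z in us uv ux vx uy vy uz vz zE *.
set v := trans_v x y z in uv vx uy vy uz vz *.
have xG : x \in G by rewrite GG mem_gen // !inE eqxx.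
have yG : y \in G by rewrite GG mem_gen // !inE eqxx ?orbT.
have zG : z \in G by rewrite GG mem_gen // !inE eqxx ?orbT.
have uG : u \in G by rewrite !groupM.
have vG : v \in G by rewrite !groupM.
have indep i j : u ^+ i = v ^+ j -> (s %| i) && (s %| j).
  have [fA [fx fy fz]] := univ _ _ _ _ (relsM s1).
  move/(congr1 fA); rewrite !morphX // /u /v /trans_u /trans_v !morphM ?groupM //.
  rewrite fx fy fz -/(trans_u _ _ _) -/(trans_v _ _ _) uM vM.
  exact: indepM.
have vs : v ^+ s = 1 by rewrite -uy -conjXg us conj1g.
have ou : #[u] = s.
  apply/eqP; rewrite eqn_dvd order_dvdn us eqxx /=.
  by have /andP[] := indep #[u] 0 (etrans (expg_order u) (esym (expg0 v))).
have ov : #[v] = s.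
  apply/eqP; rewrite eqn_dvd order_dvdn vs eqxx /=.
  by have /andP[] := indep 0 #[v] (etrans (expg0 u) (esym (expg_order v))).
have tri : <[u]> :&: <[v]> \subset [1].
  apply/subsetP => w; rewrite inE => /andP[/cycleP[i ->] /cycleP[j e]].
  have /andP[si _] := indep i j e.
  by rewrite inE -order_dvdn ou.
have cuv : <[v]> \subset 'C(<[u]>) by apply: cents_cycle.
set T := (<[u]> <*> <[v]>)%G.
have TE : (T : {set gT}) = <[u]> * <[v]> by rewrite /= cent_joinEr.
have cT : #|T| = (s * s)%N.
  have := mul_cardG <[u]> <[v]>; rewrite -TE.
  have -> : #|<[u]> :&: <[v]>| = 1%N.
    by rewrite (trivgP tri) cards1.
  by rewrite muln1 -!orderE ou ov.
have uT : u \in T by rewrite mem_gen // inE cycle_id.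
have vT : v \in T by rewrite mem_gen // inE cycle_id orbT.
have normT g : u ^ g \in T -> v ^ g \in T -> g \in 'N(T).
  move=> ugT vgT; rewrite inE /= conjYg -!cycleJ join_subG !cycle_subG; exact/andP.
have xN : x \in 'N(T).
  apply: normT; first by rewrite ux groupV.
  by rewrite vx groupM ?groupV.
have yN : y \in 'N(T) by apply: normT; rewrite ?uy ?vy.
set D := (<[x * y]> <*> <[x]>)%G.
have xND : x \in 'N(<[x * y]>).
  rewrite inE -cycleJ cycle_subG /conjg hx -!mulgA cancel2 //.
  have -> : y * x = (x * y)^-1 by rewrite invMg hx hy.
  by rewrite groupV cycle_id.
have DE : (D : {set gT}) = <[x * y]> * <[x]> by rewrite /= norm_joinEr // cycle_subG.
have cD : #|D| <= 6.
  have := mul_cardG <[x * y]> <[x]>; rewrite -DE -!orderE.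
  have : #[x * y] <= 3 by apply: dvdn_leq; rewrite // order_dvdn xy3.
  have : #[x] <= 2 by apply: dvdn_leq; rewrite // order_dvdn x2.
  move=> p2 p3; set k := #|_ :&: _| => e.
  have p1 : 0 < k by apply/card_gt0P; exists 1; rewrite inE !group1.
  by apply: leq_trans (leq_pmulr _ p1) _; rewrite -e (leq_mul p3 p2).
have DN : D \subset 'N(T) by rewrite join_subG !cycle_subG groupM.
have TDE : (T <*> D)%G = T * D :> {set gT} by rewrite /= norm_joinEr.
have GTD : G \subset T <*> D.
  have sD := subsetP (joing_subr T D).
  have xD : x \in T <*> D by apply: sD; rewrite mem_gen // inE cycle_id orbT.
  have xyD : x * y \in T <*> D by apply: sD; rewrite mem_gen // inE cycle_id.
  have yD : y \in T <*> D by rewrite -(mulKg x y) hx groupM.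
  have uD : u \in T <*> D by apply: (subsetP (joing_subl T D)).
  have zD : z \in T <*> D.
    by rewrite zE; exact: (groupM (groupM (groupM yD xD) uD) yD).
  by rewrite GG gen_subG !subUset !sub1set xD yD; exact: zD.
have cG : #|G| <= 6 * (s * s).
  apply: leq_trans (subset_leq_card GTD) _.
  have := mul_cardG T D; rewrite -TDE cT.
  set k := #|_ :&: _| => e.
  have p1 : 0 < k by apply/card_gt0P; exists 1; rewrite inE !group1.
  apply: leq_trans (leq_pmulr _ p1) _; rewrite -e mulnC leq_mul2r cD orbT //.
have TG : T \subset G by rewrite join_subG !cycle_subG uG.
have i6 : 6 %| #|G : T|.
  have [fB [fx fy fz]] := univ _ _ _ _ (S3rels s).
  have fu : fB u = 1.
    by rewrite /u /trans_u !morphM ?groupM // fx fy fz -/(trans_u _ _ _) e.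
  have fv : fB v = 1.
    by rewrite /v /trans_v !morphM ?groupM // fx fy fz -/(trans_v _ _ _) S3v.
  have TK : T \subset 'ker fB.
    by rewrite join_subG !cycle_subG; apply/andP; split; apply/kerP.
  apply: dvdn_trans (indexgS G TK).
  have := card_morphim fB G; rewrite setIid => <-.
  have pord (g : {perm 'I_3}) p : prime p -> g ^+ p = 1 -> g != 1 -> #[g] = p.
    move=> pp gp g1; have : #[g] %| p by rewrite order_dvdn gp.
    case/primeP: pp => _ /[apply] /orP[|/eqP //].
    by rewrite order_eq1 (negPf g1).
  have o3 := pord _ 3 isT S3a S3b.
  have t02 : t0 ^+ 2 = 1 by have [[]] := S3rels s.
  have o2 := pord _ 2 isT t02 S3c.
  have m3 : t0 * t1 \in fB @* G by rewrite -fx -fy -morphM // mem_morphim ?groupM.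
  have m2 : t0 \in fB @* G by rewrite -fx mem_morphim.
  have := order_dvdG m3; have := order_dvdG m2; rewrite o3 o2.
  by move=> h2 h3; rewrite -[6]/(2 * 3)%N Gauss_dvd // h2 h3.
have cGs : #|G| = (6 * (s * s))%N.
  have := Lagrange TG; rewrite cT => e.
  have ip : 0 < #|G : T| by rewrite indexg_gt0.
  case/dvdnP: i6 ip e cG => m -> ip <-.
  rewrite mulnC leq_pmul2r ?muln_gt0 ?(leq_trans _ s2) // => m1.
  have -> : m = 1%N by move: ip m1; case: m => [|[|]].
  by rewrite mulnC.
set p := u ^+ a; set q := v ^+ b.
have cpq : <[q]> \subset 'C(<[p]>) by apply: cents_cycle; apply: commuteX2.
have HE : <<[set p; q]>> = <[p]> * <[q]>.
  rewrite -cent_joinEr //; apply/eqP; rewrite eqEsubset gen_subG !subUset !sub1set.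
  rewrite !mem_gen ?inE ?cycle_id ?orbT //= join_subG !cycle_subG.
  by rewrite !mem_gen // !inE eqxx ?orbT.
have op : #[p] = s %/ a by rewrite orderXdiv ou.
have oq : #[q] = s %/ b by rewrite orderXdiv ov.
have tri2 : <[p]> :&: <[q]> \subset [1].
  by apply: subset_trans tri; apply: setISS; apply: cycleX.
have cH : #|<<[set p; q]>>| = (s %/ a * (s %/ b))%N.
  have := mul_cardG <[p]> <[q]>; rewrite -HE.
  have -> : #|<[p]> :&: <[q]>| = 1%N by rewrite (trivgP tri2) cards1.
  by rewrite muln1 -!orderE op oq.
have HG : <<[set p; q]>>%G \subset G by rewrite gen_subG !subUset !sub1set !groupX.
have iH : #|G : <<[set p; q]>>%G| = (6 * a * b)%N.
  have := Lagrange HG; rewrite cH cGs.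
  set k := #|G : _|; set pa := s %/ a; set pb := s %/ b.
  have sa : s = (pa * a)%N by rewrite divnK.
  have sb : s = (pb * b)%N by rewrite divnK.
  have pa0 : 0 < pa by rewrite divn_gt0 // dvdn_leq // ltnW.
  have pb0 : 0 < pb by rewrite divn_gt0 // dvdn_leq // ltnW.
  rewrite {2}sa {1}sb => e; apply/eqP; rewrite -(@eqn_pmul2l (pa * pb)) ?muln_gt0 ?pa0 // e.
  apply/eqP; ring.
have cf : core_free G <<[set p; q]>>%G.
  move=> N nNG sNH; apply/trivgP/subsetP => n nN.
  have nH : n \in <[p]> * <[q]> by rewrite -HE (subsetP sNH).
  have nyH : n ^ y \in <[p]> * <[q]>.
    by rewrite -HE (subsetP sNH) // memJ_norm // (subsetP (normal_norm nNG)).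
  case/mulsgP: nH => p1 q1 /cycleP[i ->] /cycleP[j ->] en.
  case/mulsgP: nyH => p2 q2 /cycleP[k ->] /cycleP[l ->].
  rewrite en conjMg (conjXg p y i) (conjXg q y j) /p /q (conjXg u y a) (conjXg v y b) uy vy -!expgM.
  have cuv' : commute (v ^+ (a * i)) (u ^+ (b * j)) by apply: commuteX2.
  rewrite cuv'.
  case/(decomp tri (mem_cycle _ _) (mem_cycle _ _) (mem_cycle _ _) (mem_cycle _ _)).
  move=> /eqP e1 /eqP e2.
  rewrite eq_expg_mod_order ou in e1; rewrite eq_expg_mod_order ov in e2.
  have d1 : s %| a * i by apply: (arith aS bS lab (eqP e2)).
  have d2 : s %| b * j.
    by apply: (arith bS aS _ (eqP e1)); rewrite lcmnC.
  rewrite inE /p /q.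
  move: d1 d2; rewrite -{1}ou -ov !order_dvdn => /eqP -> /eqP ->.
  by rewrite mulg1.
split=> //.
exact: (coset_rep HG iH cf).
Qed.
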